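(* Let $k(\cdot\mid\theta)$ be the $\mathrm{N}(\theta,1)$ density, $q_0$ the $\mathrm{N}(0,1)$ density, $\theta^*\in\mathbb{R}$ and $x_1=\dots=x_n=\theta^*$. Then for every $s=1,\dots,n$ and every partition $A=\{A_1,\dots,A_s\}\in\tau_s(n)$, $$\frac{\prod_{j=1}^sm(x_{A_j})}{m(x_{1:n})}=\Big\{\frac{n+1}{\prod_{j=1}^s(a_j+1)}\Big\}^{1/2}\exp\Big\{\frac{{\theta^*}^2}{2}\Big(-\frac{n^2}{n+1}+\sum_{j=1}^s\frac{a_j^2}{a_j+1}\Big)\Big\}\le\Big(\frac{n}{\prod_{j=1}^sa_j}\Big)^{1/2}.$$
   Context: $\tau_s(n)$ is the set of partitions of $\{1,\dots,n\}$ into $s$ nonempty blocks, $a_j=|A_j|$, and for $B\subseteq\{1,\dots,n\}$, $m(x_B)=\int\prod_{i\in B}k(x_i\mid\theta)q_0(\theta)d\theta$. *)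

(* Defs.v *)
From HB Require Import structures.
From mathcomp Require Import all_boot all_order all_algebra.
From mathcomp Require Import all_classical all_reals all_analysis.
Set Implicit Arguments. Unset Strict Implicit. Unset Printing Implicit Defensive.
Import Order.TTheory GRing.Theory Num.Theory.
Local Open Scope ring_scope.

Definition gauss_pdf {R : realType} (mu y : R) : R :=
  (Num.sqrt (2 * pi))^-1 * expR (- ((y - mu) ^+ 2) / 2).

Definition kern {R : realType} (y theta : R) : R := gauss_pdf theta y.

Definition q0 {R : realType} (theta : R) : R := gauss_pdf 0 theta.

Definition marg {R : realType} {n : nat} (x : 'I_n -> R) (B : {set 'I_n}) : R :=
  Rintegral (@lebesgue_measure R) [set: R]
    (fun theta => (\prod_(i in B) kern (x i) theta) * q0 theta).

(* Main.v *)
Require Import Defs.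
From HB Require Import structures.
From mathcomp Require Import all_boot all_order all_algebra.
From mathcomp Require Import all_classical all_reals all_analysis.
From mathcomp Require Import ring lra zify.
Import Order.TTheory GRing.Theory Num.Theory.
Local Open Scope ring_scope.

Definition Mc {R : realType} (t : R) (a : nat) : R :=
  (Num.sqrt (2 * pi))^-1 ^+ a * (Num.sqrt (a.+1%:R))^-1 *
  expR (t ^+ 2 / 2 * (a%:R ^+ 2 / a.+1%:R - a%:R)).

Lemma integrand_eq {R : realType} (t th : R) (a : nat) :
  (kern t th) ^+ a * q0 th =
  Mc t a * normal_pdf (a%:R * t / a.+1%:R) (Num.sqrt (a.+1%:R))^-1 th.
Proof.
have Ap : (0 : R) < a.+1%:R by rewrite ltr0n.
have sAp : 0 < Num.sqrt (a.+1%:R : R) by rewrite sqrtr_gt0.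
have cp : 0 < Num.sqrt (2 * pi : R) by rewrite sqrtr_gt0 mulr_gt0 ?pi_gt0.
rewrite normal_pdfE; last by rewrite invr_eq0 gt_eqF.
rewrite /Mc /kern /q0 /gauss_pdf /normal_peak /normal_fun.
set A : R := a.+1%:R.
set c : R := Num.sqrt (2 * pi).
set sA : R := Num.sqrt A.
have e1 : sA^-1 ^+ 2 = A^-1 by rewrite exprVn sqr_sqrtr ?ltW.
have e2 : Num.sqrt (A^-1 ^+ 1 * pi *+ 2) = sA^-1 * c.
  rewrite expr1 -mulrnAr -mulr_natl sqrtrM ?invr_ge0 ?ltW // sqrtrV ?ltW //.
rewrite e1 -(expr1 A^-1) e2 expr1.
rewrite exprMn -expRM_natl.
rewrite invfM invrK.
transitivity (c^-1 ^+ a * c^-1 * expR (a%:R * (- (t - th) ^+ 2 / 2) + - (th - 0) ^+ 2 / 2)).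
  by rewrite expRD; ring.
transitivity (c^-1 ^+ a * c^-1 * expR (t ^+ 2 / 2 * (a%:R ^+ 2 / A - a%:R) + - (th - a%:R * t / A) ^+ 2 / (A^-1 *+ 2))); last first.
  rewrite expRD; field.
  by rewrite !gt_eqF.
congr (_ * expR _).
rewrite /A -natr1.
field.
by rewrite addrC natr1 pnatr_eq0.
Qed.


Lemma marg_const {R : realType} n (t : R) (x : 'I_n -> R) (hx : forall i, x i = t)
  (B : {set 'I_n}) : marg x B = Mc t #|B|.
Proof.
rewrite /marg.
transitivity (Rintegral (@lebesgue_measure R) [set: R] (fun th => Mc t #|B| * normal_pdf (#|B|%:R * t / #|B|.+1%:R) (Num.sqrt (#|B|.+1%:R))^-1 th)).
  apply: eq_Rintegral => th _.
  rewrite -integrand_eq -prodr_const.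
  by congr (_ * _); apply: eq_bigr => i _; rewrite hx.
rewrite RintegralZl //; last exact: integrable_normal_pdf.
by rewrite /Rintegral integral_normal_pdf mulr1.
Qed.

Lemma sqrt_prod {R : realType} (I : finType) (P : pred I) (f : I -> R) :
  (forall i, 0 <= f i) ->
  \prod_(i in P) Num.sqrt (f i) = Num.sqrt (\prod_(i in P) f i).
Proof.
move=> f0.
have : (\prod_(i in P) Num.sqrt (f i) = Num.sqrt (\prod_(i in P) f i)) /\
       0 <= \prod_(i in P) f i.
  apply: (big_ind2 (fun y1 y2 => y1 = Num.sqrt y2 /\ 0 <= y2)).
  - by rewrite sqrtr1.
  - move=> x1 x2 y1 y2 [-> h1] [-> h2]; split; last exact: mulr_ge0.
    by rewrite sqrtrM.
  - by move=> i _; split.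
by case.
Qed.

Lemma term_le {R : realType} (a n : R) : 0 <= a -> a <= n ->
  a ^+ 2 / (a + 1) <= a * (n / (n + 1)).
Proof.
move=> a0 an.
have h : a * (n / (n + 1)) - a ^+ 2 / (a + 1) = a * (n - a) / ((a + 1) * (n + 1)).
  field; apply/andP; split; rewrite gt_eqF //; lra.
rewrite -subr_ge0 h divr_ge0 // ?mulr_ge0 //; lra.
Qed.

Theorem lemmaS19 (R : realType) (n : nat) (theta_star : R) (x : 'I_n -> R)
    (hx : forall i, x i = theta_star) (s : nat) (A : {set {set 'I_n}})
    (hs1 : (1 <= s)%N) (hsn : (s <= n)%N)
    (hA : finset.partition A [set: 'I_n]) (hcard : #|A| = s) :
  (\prod_(B in A) marg x B) / marg x [set: 'I_n] =
    Num.sqrt (n.+1%:R / \prod_(B in A) (#|B|.+1)%:R) *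
    expR (theta_star ^+ 2 / 2 *
          (- ((n%:R) ^+ 2 / n.+1%:R) +
           \sum_(B in A) ((#|B|%:R) ^+ 2 / (#|B|.+1)%:R)))
  /\
  Num.sqrt (n.+1%:R / \prod_(B in A) (#|B|.+1)%:R) *
    expR (theta_star ^+ 2 / 2 *
          (- ((n%:R) ^+ 2 / n.+1%:R) +
           \sum_(B in A) ((#|B|%:R) ^+ 2 / (#|B|.+1)%:R)))
  <= Num.sqrt (n%:R / \prod_(B in A) (#|B|)%:R).
Proof.
set t := theta_star.
have hsum : (\sum_(B in A) #|B| = n)%N.
  by rewrite -(card_partition hA) cardsT card_ord.
have hsumR : \sum_(B in A) (#|B|%:R : R) = n%:R by rewrite -natr_sum hsum.
have hne : forall B, B \in A -> (0 < #|B|)%N.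
  move=> B BA; rewrite card_gt0; apply/negP => /eqP B0.
  move: hA; rewrite /partition => /and3P [_ _ /negP]; apply.
  by rewrite -B0.
set P1 : R := \prod_(B in A) (#|B|.+1)%:R.
set P0 : R := \prod_(B in A) (#|B|)%:R.
set S : R := \sum_(B in A) ((#|B|%:R) ^+ 2 / (#|B|.+1)%:R).
have P1p : 0 < P1 by apply: prodr_gt0 => B _; rewrite ltr0n.
have P0p : 0 < P0 by apply: prodr_gt0 => B BA; rewrite ltr0n hne.
split.
  rewrite (@marg_const R n t x hx) cardsT card_ord.
  under eq_bigr do rewrite (@marg_const R n t x hx).
  rewrite /Mc !big_split /= prodrXr hsum prodfV -expR_sum.
  rewrite sqrt_prod; last by move=> B; rewrite ler0n.
  rewrite -/P1 (@sqrtrM _ n.+1%:R P1^-1) ?ler0n // sqrtrV ?ltW //.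
  have -> : \sum_(B in A) (t ^+ 2 / 2 * ((#|B|%:R) ^+ 2 / (#|B|.+1)%:R - #|B|%:R))
      = t ^+ 2 / 2 * S - t ^+ 2 / 2 * n%:R.
    by rewrite -hsumR /S mulr_sumr mulr_sumr -sumrB; apply: eq_bigr => B _; ring.
  have c0 : Num.sqrt (2 * pi) != 0 :> R by rewrite gt_eqF // sqrtr_gt0 mulr_gt0 ?pi_gt0.
  have s0 : Num.sqrt P1 != 0 by rewrite gt_eqF // sqrtr_gt0.
  have s1 : Num.sqrt (n.+1%:R) != 0 :> R by rewrite gt_eqF // sqrtr_gt0 ltr0n.
  have -> : t ^+ 2 / 2 * (- (n%:R ^+ 2 / n.+1%:R) + S) =
     (t ^+ 2 / 2 * S - t ^+ 2 / 2 * n%:R) - t ^+ 2 / 2 * (n%:R ^+ 2 / n.+1%:R - n%:R).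
    by ring.
  rewrite [in RHS]expRD expRN.
  field.
  apply/and4P; split => //; first by rewrite gt_eqF ?expR_gt0.
  by rewrite expf_neq0 ?invr_eq0.
have E0 : t ^+ 2 / 2 * (- (n%:R ^+ 2 / n.+1%:R) + S) <= 0.
  rewrite mulr_ge0_le0 //; first by rewrite divr_ge0 ?sqr_ge0.
  rewrite addrC subr_le0.
  have -> : (n%:R ^+ 2 / n.+1%:R : R) = \sum_(B in A) #|B|%:R * (n%:R / (n%:R + 1)).
    by rewrite -mulr_suml hsumR -natr1; field; rewrite natr1 pnatr_eq0.
  apply: ler_sum => B _; rewrite -natr1; apply: term_le; first exact: ler0n.
  by rewrite ler_nat (leq_trans (max_card _)) ?card_ord.
apply: (@le_trans _ _ (Num.sqrt (n.+1%:R / P1))).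
  by rewrite ler_piMr ?sqrtr_ge0 // expR_le1.

rewrite ler_sqrt; last by rewrite divr_ge0 ?ler0n ?ltW.
rewrite ler_pdivlMr // mulrAC ler_pdivrMr //.
rewrite /P0 /P1 -!natr_prod -!natrM ler_nat.
have : (0 < #|A|)%N by rewrite hcard.
rewrite card_gt0 => /set0Pn [B0 B0A].
rewrite (bigD1 B0) //= (bigD1 B0 B0A) /=.
have a0n : (#|B0| <= n)%N by rewrite (leq_trans (max_card _)) ?card_ord.
have r01 : (\prod_(B in A | B != B0) #|B| <= \prod_(B in A | B != B0) #|B|.+1)%N.
  by apply: leq_prod => B _; exact: leqnSn.
rewrite mulnA [X in (_ <= X)%N]mulnA.
apply: leq_mul => //.
by rewrite mulSn mulnS leq_add2r.
Qed.
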